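(* Let $G$ be a group, $H\le G$, $S$ a right transversal of $H$ in $G$ with induced right loop operation $\circ$, and for $x\in S$, $h\in H$ let $x\theta h$ denote the unique element of $S\cap Hxh$. Let $U$ be a congruence on $(S,\circ)$ with $\{(x,x\theta h): h\in H, x\in S\}\subseteq U$, and let $T$ be the $U$-class of $1$. Then $S/U$ is a group, $N=HT$ is a normal subgroup of $G=HS$, $H\le N$, $N\cap S=T$, and $G/N\cong S/U$.
   Context: For a subgroup $H$ of a group $G$, a right transversal $S$ is a subset containing exactly one element of each right coset $Hg$, with $1\in S$; then $G=HS$. The induced operation: $x\circ y$ is the unique element of $S\cap Hxy$; $(S,\circ)$ is a right loop (two-sided identity, unique solutions of $X\circ a=b$). A congruence on a right loop $S$ is an equivalence relation on $S$ that is a right subloop of $S\times S$ (componentwise operation); if $T$ is the class of $1$, the classes are $T\circ x$ and $S/U=\{T\circ x\}$ has operation $(T\circ x)\circ(T\circ y)=T\circ(x\circ y)$. *)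

(* Defs.v *)
Set Implicit Arguments.

Section Defs.
Variable G : Type.
Variable mul : G -> G -> G.
Variable inv : G -> G.
Variable one : G.

Definition is_group : Prop :=
  (forall x y z, mul x (mul y z) = mul (mul x y) z) /\
  (forall x, mul one x = x) /\ (forall x, mul x one = x) /\
  (forall x, mul (inv x) x = one) /\ (forall x, mul x (inv x) = one).

Definition is_subgroup (H : G -> Prop) : Prop :=
  H one /\ (forall x y, H x -> H y -> H (mul x y)) /\ (forall x, H x -> H (inv x)).

Definition is_normal_subgroup (N : G -> Prop) : Prop :=
  is_subgroup N /\ (forall g n, N n -> N (mul (mul (inv g) n) g)).

Definition in_rcoset (H : G -> Prop) (g x : G) : Prop := H (mul x (inv g)).

Definition right_transversal (H S : G -> Prop) : Prop :=
  S one /\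
  (forall g, exists s, S s /\ in_rcoset H g s) /\
  (forall s s', S s -> S s' -> in_rcoset H s' s -> s = s').

Definition is_induced_op (H S : G -> Prop) (circ : G -> G -> G) : Prop :=
  forall x y, S x -> S y -> S (circ x y) /\ in_rcoset H (mul x y) (circ x y).

Definition is_theta (H S : G -> Prop) (theta : G -> G -> G) : Prop :=
  forall x h, S x -> H h -> S (theta x h) /\ in_rcoset H (mul x h) (theta x h).

(* U is a congruence on the right loop (S, circ): an equivalence relation on S
   which is a right subloop of S x S (contains (1,1), closed under the
   componentwise operation and under componentwise right division). *)
Definition is_congruence (S : G -> Prop) (circ : G -> G -> G)
    (U : G -> G -> Prop) : Prop :=
  (forall x y, U x y -> S x /\ S y) /\
  (forall x, S x -> U x x) /\
  (forall x y, U x y -> U y x) /\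
  (forall x y z, U x y -> U y z -> U x z) /\
  U one one /\
  (forall a a' b b', U a a' -> U b b' -> U (circ a b) (circ a' b')) /\
  (forall a a' b b' X X', U a a' -> U b b' -> S X -> S X' ->
      circ X a = b -> circ X' a' = b' -> U X X').

Definition class_one (U : G -> G -> Prop) : G -> Prop := fun t => U one t.

Definition setmul (A B : G -> Prop) : G -> Prop :=
  fun g => exists a b, A a /\ B b /\ g = mul a b.

(* S/U (classes of U with the induced operation) is a group; elements of S/U
   are represented by elements of S, equality in S/U being U. *)
Definition quotient_loop_is_group (S : G -> Prop) (circ : G -> G -> G)
    (U : G -> G -> Prop) : Prop :=
  (forall x x' y y', U x x' -> U y y' -> U (circ x y) (circ x' y')) /\
  (forall x y z, S x -> S y -> S z ->
      U (circ (circ x y) z) (circ x (circ y z))) /\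
  (forall x, S x -> U (circ one x) x /\ U (circ x one) x) /\
  (forall x, S x -> exists y, S y /\ U (circ x y) one /\ U (circ y x) one).

(* G/N is isomorphic to S/U: there is a map f : G -> S inducing a well-defined
   bijective homomorphism from the cosets of N onto the U-classes. *)
Definition quotients_isomorphic (N S : G -> Prop) (circ : G -> G -> G)
    (U : G -> G -> Prop) : Prop :=
  exists f : G -> G,
    (forall g, S (f g)) /\
    (forall g1 g2, N (mul g1 (inv g2)) <-> U (f g1) (f g2)) /\
    (forall g1 g2, U (f (mul g1 g2)) (circ (f g1) (f g2))) /\
    (forall s, S s -> exists g, U (f g) s).

End Defs.

(* Main.v *)
Require Import Defs.
From Stdlib Require Import ClassicalEpsilon.

Theorem mainTheorem8 (G : Type) (mul : G -> G -> G) (inv : G -> G) (one : G)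
  (H S : G -> Prop) (circ theta : G -> G -> G) (U : G -> G -> Prop) :
  is_group mul inv one ->
  is_subgroup mul inv one H ->
  right_transversal mul inv one H S ->
  is_induced_op mul inv H S circ ->
  is_theta mul inv H S theta ->
  is_congruence one S circ U ->
  (forall x h, S x -> H h -> U x (theta x h)) ->
  quotient_loop_is_group one S circ U /\
  is_normal_subgroup mul inv one (setmul mul H (class_one one U)) /\
  (forall h, H h -> setmul mul H (class_one one U) h) /\
  (forall s, (setmul mul H (class_one one U) s /\ S s) <-> class_one one U s) /\
  quotients_isomorphic mul inv (setmul mul H (class_one one U)) S circ U.
Proof.
  intros [A [L1 [R1 [LV RV]]]] [H1 [HM HI]] [S1 [Sex Suniq]] Hc Ht
    [US [Urefl [Usym [Utr [U11 [Ucomp Udiv]]]]]] Uth.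
  unfold in_rcoset in *.
  assert (invu : forall x y, mul x y = one -> y = inv x).
  { intros x y E. rewrite <- (L1 y), <- (LV x), <- A, E, R1. reflexivity. }
  assert (inv_mul : forall a b, inv (mul a b) = mul (inv b) (inv a)).
  { intros a b. symmetry. apply invu.
    rewrite <- A, (A b), RV, L1, RV. reflexivity. }
  assert (inv_inv : forall a, inv (inv a) = a).
  { intros a. symmetry. apply invu. apply LV. }
  pose (p := fun g => proj1_sig (constructive_indefinite_description _ (Sex g))).
  assert (Hp : forall g, S (p g) /\ H (mul (p g) (inv g))).
  { intro g. exact (proj2_sig (constructive_indefinite_description _ (Sex g))). }
  clearbody p.
  assert (Lp_eq : forall g s, S s -> H (mul s (inv g)) -> p g = s).
  { intros g s Ss Hs. destruct (Hp g) as [Sp Hpg]. apply Suniq; auto.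
    replace (mul (p g) (inv s)) with (mul (mul (p g) (inv g)) (inv (mul s (inv g)))).
    - apply HM; auto.
    - rewrite inv_mul, inv_inv, A, <- (A _ (inv g) g), LV, R1. reflexivity. }
  assert (Lp_S : forall s, S s -> p s = s).
  { intros s Ss. apply Lp_eq; auto. rewrite RV. exact H1. }
  assert (Lp_H : forall h g, H h -> p (mul h g) = p g).
  { intros h g Hh. apply Lp_eq. apply Hp.
    rewrite inv_mul, A. apply HM. apply Hp. apply HI; auto. }
  assert (Lrep : forall g, exists k, H k /\ p g = mul k g).
  { intro g. exists (mul (p g) (inv g)). split. apply Hp.
    rewrite <- A, LV, R1. reflexivity. }
  assert (Lp_rep : forall a b, p (mul (p a) b) = p (mul a b)).
  { intros a b. destruct (Lrep a) as [k [Hk E]]. rewrite E, <- A. apply Lp_H; auto. }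
  assert (Lcirc : forall x y, S x -> S y -> circ x y = p (mul x y)).
  { intros x y Sx Sy. destruct (Hc x y Sx Sy). symmetry. apply Lp_eq; auto. }
  assert (Lth : forall x h, S x -> H h -> theta x h = p (mul x h)).
  { intros x h Sx Hh. destruct (Ht x h Sx Hh). symmetry. apply Lp_eq; auto. }
  assert (Lhom : forall a b, U (p (mul a b)) (circ (p a) (p b))).
  { intros a b. rewrite <- Lp_rep.
    destruct (Lrep b) as [k [Hk E]].
    assert (Eb : b = mul (inv k) (p b)).
    { rewrite E, A, LV, L1. reflexivity. }
    destruct (Lrep (mul (p a) (inv k))) as [j [Hj Ej]].
    assert (Et : mul (p a) (inv k) = mul (inv j) (p (mul (p a) (inv k)))).
    { rewrite Ej, A, LV, L1. reflexivity. }
    replace (mul (p a) b) with (mul (inv j) (mul (p (mul (p a) (inv k))) (p b)))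
      by (rewrite A, <- Et, <- A, <- Eb; reflexivity).
    rewrite Lp_H by (apply HI; auto).
    rewrite <- Lcirc by (apply Hp).
    apply Usym, Ucomp. rewrite <- Lth by (try apply Hp; apply HI; auto).
    apply Uth. apply Hp. apply HI; auto. apply Urefl, Hp. }
  assert (Lp1 : p one = one) by (apply Lp_S; auto).
  assert (SU : forall x y, U x y -> S y) by (intros x y E; apply (US x y E)).
  assert (Nchar : forall g, setmul mul H (class_one one U) g <-> U one (p g)).
  { intro g; split.
    - intros [h [t [Hh [Tt E]]]]. subst g. rewrite Lp_H by auto.
      rewrite Lp_S; eauto.
    - intro E. destruct (Lrep g) as [k [Hk Ek]]. exists (inv k), (p g).
      split. apply HI; auto. split. exact E. rewrite Ek, A, LV, L1. reflexivity. }
  assert (circ1l : forall x, S x -> circ one x = x).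
  { intros x Sx. rewrite Lcirc, L1, Lp_S; auto. }
  assert (circ1r : forall x, S x -> circ x one = x).
  { intros x Sx. rewrite Lcirc, R1, Lp_S; auto. }
  split; [|split; [|split; [|split]]].
  - split; [exact Ucomp|split; [|split]].
    + intros x y z Sx Sy Sz.
      rewrite (Lcirc x y) by auto. rewrite (Lcirc _ z) by (auto; apply Hp).
      rewrite Lp_rep, (Lcirc y z) by auto.
      rewrite <- (Lp_S x Sx) at 2. rewrite <- A. apply Lhom.
    + intros x Sx. rewrite circ1l, circ1r by auto. split; apply Urefl; auto.
    + intros x Sx. exists (p (inv x)). split. apply Hp. split.
      * apply Usym. pose proof (Lhom x (inv x)) as Q. rewrite RV, Lp1, Lp_S in Q; auto.
      * rewrite Lcirc by (auto; apply Hp). rewrite Lp_rep, LV, Lp1. auto.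
  - split; [split; [|split]|].
    + apply Nchar. rewrite Lp1. auto.
    + intros x y Nx Ny. apply Nchar in Nx, Ny. apply Nchar.
      eapply Utr; [|apply Usym, Lhom]. rewrite <- (circ1l one S1) at 1.
      apply Ucomp; auto.
    + intros x Nx. apply Nchar in Nx. apply Nchar.
      pose proof (Lhom (inv x) x) as Q. rewrite LV, Lp1 in Q.
      eapply Utr. exact Q. rewrite <- (circ1r (p (inv x))) at 2 by apply Hp.
      apply Ucomp. apply Urefl, Hp. apply Usym; auto.
    + intros g n Nn. apply Nchar in Nn. apply Nchar.
      eapply Utr; [|apply Usym, Lhom].
      eapply Utr; [| apply Ucomp; [apply Usym, Lhom | apply Urefl, Hp]].
      eapply Utr; [| apply Ucomp; [apply Ucomp; [apply Urefl, Hp | exact Nn] | apply Urefl, Hp]].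
      rewrite circ1r by apply Hp.
      pose proof (Lhom (inv g) g) as Q. rewrite LV, Lp1 in Q. exact Q.
  - intros h Hh. exists h, one. split; auto.
  - intro s. split.
    + intros [Ns Ss]. apply Nchar in Ns. rewrite Lp_S in Ns; auto.
    + intro E. split; [exists one, s; split; [exact H1|split; [exact E|rewrite L1; reflexivity]] | eapply SU; eauto].
  - exists p. split; [intro; apply Hp|split; [|split]].
    + intros g1 g2. rewrite Nchar. split.
      * intro E.
        pose proof (Lhom (mul g1 (inv g2)) g2) as Q. rewrite <- A, LV, R1 in Q.
        eapply Utr. exact Q.
        rewrite <- (circ1l (p g2)) at 2 by apply Hp.
        apply Ucomp. apply Usym; auto. apply Urefl, Hp.
      * intro E. apply Usym.
        apply (Udiv (p g2) (p g2) (circ (p (mul g1 (inv g2))) (p g2)) (circ one (p g2))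
                 (p (mul g1 (inv g2))) one); auto; try apply Urefl, Hp; try apply Hp.
        eapply Utr. apply Usym, Lhom. rewrite <- A, LV, R1.
        rewrite circ1l by apply Hp. exact E.
    + apply Lhom.
    + intros s Ss. exists s. rewrite Lp_S; auto.
Qed.
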